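(* Let $X\subset[0,1]$ with $\overline{\dim}_B(X)=a$. Then $\overline{\dim}_{GB}(X)\ge 2a$.
   Context: For $\delta>0$ and $F\subset\mathbb{R}^d$, $N_\delta(F)$ is the number of cubes of the standard $\delta$-grid in $\mathbb{R}^d$ that intersect $F$, and $\overline{\dim}_B(F)=\limsup_{\delta\to0}\frac{\log N_\delta(F)}{-\log\delta}$. $C_u(X)$ is the set of uniformly continuous real functions on $X$, $\mathrm{graph}(f)=\{(x,f(x)):x\in X\}$, and $\overline{\dim}_{GB}(X)=\sup_{f\in C_u(X)}\overline{\dim}_B(\mathrm{graph}(f))$. *)

(* Defs.v *)
From HB Require Import structures.
From mathcomp Require Import all_boot all_order all_algebra.
From mathcomp Require Import all_classical all_reals all_analysis.
Set Implicit Arguments. Unset Strict Implicit. Unset Printing Implicit Defensive.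
Import Order.TTheory GRing.Theory Num.Theory.
Local Open Scope classical_set_scope.
Local Open Scope ring_scope.

Section BoxDim.
Variable R : realType.

Definition grid_cube (d : nat) (delta : R) (k : 'rV[int]_d) : set 'rV[R]_d :=
  [set x | forall i : 'I_d, (k ord0 i)%:~R * delta <= x ord0 i
                            <= ((k ord0 i)%:~R + 1) * delta].

Definition Ndelta (d : nat) (delta : R) (F : set 'rV[R]_d) : \bar R :=
  esum [set k : 'rV[int]_d | grid_cube delta k `&` F !=set0] (fun _ => 1%E).

Definition box_ratio (d : nat) (F : set 'rV[R]_d) (delta : R) : \bar R :=
  match Ndelta delta F with
  | EFin n => (ln n / (- ln delta))%:E
  | +oo%E => +oo%E
  | -oo%E => -oo%E
  end.

Definition upper_box_dim (d : nat) (F : set 'rV[R]_d) : \bar R :=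
  ereal_inf [set ereal_sup [set box_ratio F delta | delta in `]0, e[ ]
            | e in `]0, 1[ ].

Definition embed1 (X : set R) : set 'rV[R]_1 := [set \row_(i < 1) x | x in X].

Definition graph (X : set R) (f : R -> R) : set 'rV[R]_2 :=
  [set \row_(i < 2) (if i == ord0 then x else f x) | x in X].

Definition unif_cont_on (X : set R) (f : R -> R) : Prop :=
  forall eps : R, 0 < eps -> exists2 del : R, 0 < del &
    forall x y, X x -> X y -> `|x - y| < del -> `|f x - f y| < eps.

Definition dimB (X : set R) : \bar R := upper_box_dim (embed1 X).

Definition dimGB (X : set R) : \bar R :=
  ereal_sup [set upper_box_dim (graph X f) | f in unif_cont_on X].

End BoxDim.

(* Main.v *)
Require Import Defs.
From HB Require Import structures.
From mathcomp Require Import all_boot all_order all_algebra.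
From mathcomp Require Import all_classical all_reals all_analysis.
From mathcomp Require Import zify ring lra.
Import Order.TTheory GRing.Theory Num.Theory.
Set Implicit Arguments. Unset Strict Implicit. Unset Printing Implicit Defensive.
Local Open Scope classical_set_scope.
Local Open Scope ring_scope.


Definition tent (R : realType) (u : R) : R :=
  Num.min (u - 2 * (Num.floor (u / 2))%:~R) (2 * (Num.floor (u / 2))%:~R + 2 - u).

Lemma tent_bounds (R : realType) (u : R) :
  2 * (Num.floor (u / 2))%:~R <= u < 2 * (Num.floor (u / 2))%:~R + 2.
Proof.
have h1 := floor_le (u / 2); have h2 := floorD1_gt (u / 2).
rewrite intrD in h2.
set k : R := (Num.floor (u / 2))%:~R in h1 h2 *.
apply/andP; split; lra.
Qed.

Lemma tent_le_dist (R : realType) (u : R) (i : int) : tent u <= `|u - 2 * i%:~R|.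
Proof.
have /andP[h1 h2] := tent_bounds u.
rewrite /tent; set k := Num.floor (u / 2) in h1 h2 *.
have [ik|ki] := lerP i k.
  have : i%:~R <= k%:~R :> R by rewrite ler_int.
  move=> h; rewrite ge_min; apply/orP; left.
  rewrite ger0_norm; lra.
have : (k + 1)%:~R <= i%:~R :> R by rewrite ler_int; lia.
rewrite intrD => h; rewrite ge_min; apply/orP; right.
rewrite ler0_norm; lra.
Qed.

Lemma tent_eq_dist (R : realType) (u : R) : exists i : int, tent u = `|u - 2 * i%:~R|.
Proof.
have /andP[h1 h2] := tent_bounds u.
rewrite /tent; set k := Num.floor (u / 2) in h1 h2 *.
have [h|h] := leP (u - 2 * k%:~R) (2 * k%:~R + 2 - u).
  exists k; rewrite ger0_norm; lra.
exists (k + 1); rewrite intrD ler0_norm; lra.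
Qed.

Lemma tent_ge0 (R : realType) (u : R) : 0 <= tent u.
Proof. by have [i ->] := tent_eq_dist u. Qed.

Lemma tent_le1 (R : realType) (u : R) : tent u <= 1.
Proof.
rewrite /tent ge_min; set k : R := (Num.floor (u / 2))%:~R.
apply/orP; have [h|h] := lerP (u - 2 * k) 1; [left => // | right; lra].
Qed.

Lemma tent_lip (R : realType) (u v : R) : `|tent u - tent v| <= `|u - v|.
Proof.
have [i hi] := tent_eq_dist u; have [j hj] := tent_eq_dist v.
have a1 := tent_le_dist u j; have a2 := tent_le_dist v i.
have t1 : `|u - 2 * j%:~R| <= `|u - v| + `|v - 2 * j%:~R|.
  by rewrite (_ : u - 2 * j%:~R = (u - v) + (v - 2 * j%:~R)) ?ler_normD //; ring.
have t2 : `|v - 2 * i%:~R| <= `|v - u| + `|u - 2 * i%:~R|.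
  by rewrite (_ : v - 2 * i%:~R = (v - u) + (u - 2 * i%:~R)) ?ler_normD //; ring.
rewrite (distrC v u) in t2.
rewrite ler_norml; apply/andP; split; lra.
Qed.

Lemma tent_even (R : realType) (m : int) (u : R) :
  2 * m%:~R <= u <= 2 * m%:~R + 1 -> tent u = u - 2 * m%:~R.
Proof.
move=> /andP[h1 h2]; apply/le_anti; apply/andP; split.
  by have := tent_le_dist u m; rewrite ger0_norm //; lra.
have [i ->] := tent_eq_dist u.
have [im|mi] := lerP i m.
  have : i%:~R <= m%:~R :> R by rewrite ler_int.
  by move=> h; rewrite ger0_norm; lra.
have : (m + 1)%:~R <= i%:~R :> R by rewrite ler_int; lia.
by rewrite intrD => h; rewrite ler0_norm; lra.
Qed.

Lemma tent_odd (R : realType) (m : int) (u : R) :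
  2 * m%:~R + 1 <= u <= 2 * m%:~R + 2 -> tent u = 2 * m%:~R + 2 - u.
Proof.
move=> /andP[h1 h2]; apply/le_anti; apply/andP; split.
  by have := tent_le_dist u (m + 1); rewrite intrD ler0_norm //; lra.
have [i ->] := tent_eq_dist u.
have [im|mi] := lerP i m.
  have : i%:~R <= m%:~R :> R by rewrite ler_int.
  by move=> h; rewrite ger0_norm; lra.
have : (m + 1)%:~R <= i%:~R :> R by rewrite ler_int; lia.
by rewrite intrD => h; rewrite ler0_norm; lra.
Qed.

Lemma tent_piece (R : realType) (j : int) (u v : R) :
  j%:~R <= u <= j%:~R + 1 -> j%:~R <= v <= j%:~R + 1 ->
  `|tent u - tent v| = `|u - v|.
Proof.
move=> hu hv.
have : (j = 2 * (j %/ 2)%Z) \/ (j = 2 * (j %/ 2)%Z + 1) by lia.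
set m := (j %/ 2)%Z; case=> ej; rewrite ej ?intrD intrM /= in hu hv.
  rewrite (tent_even hu) (tent_even hv); congr `|_|; ring.
rewrite (tent_odd (m := m)) ?(tent_odd (m := m) (u := v)).
- by rewrite distrC; congr `|_|; ring.
- by move: hv => /andP[? ?]; apply/andP; split; lra.
- by move: hu => /andP[? ?]; apply/andP; split; lra.
Qed.


Definition gfun (R : realType) (c s : nat -> R) (n : nat) (x : R) : R :=
  c n ^+ 2 * tent (x / (c n * s n)).
Definition Ssum (R : realType) (c s : nat -> R) (n : nat) (x : R) : R :=
  \sum_(0 <= k < n) gfun c s k x.
Definition Ffun (R : realType) (c s : nat -> R) (x : R) : R :=
  sup (range (fun n => Ssum c s n x)).


Section F.
Variables (R : realType) (c s : nat -> R).
Hypothesis hc : forall n, 0 < c n.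
Hypothesis hs : forall n, 0 < s n.
Hypothesis hA : forall n, 2 * c n.+1 ^+ 2 <= c n ^+ 2.

Lemma gfun_ge0 n x : 0 <= gfun c s n x.
Proof. by rewrite /gfun mulr_ge0 ?sqr_ge0 ?tent_ge0. Qed.

Lemma gfun_le n x : gfun c s n x <= c n ^+ 2.
Proof.
rewrite /gfun -[leRHS]mulr1 ler_wpM2l ?sqr_ge0 ?tent_le1 //.
Qed.

Lemma SsumS n x : Ssum c s n.+1 x = Ssum c s n x + gfun c s n x.
Proof. by rewrite /Ssum big_nat_recr. Qed.

Lemma Ssum0 x : Ssum c s 0 x = 0.
Proof. by rewrite /Ssum big_geq. Qed.

Lemma Ssum_mono n i x : Ssum c s n x <= Ssum c s (n + i) x.
Proof.
elim: i => [|i IH]; first by rewrite addn0.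
by rewrite addnS SsumS; have := gfun_ge0 (n + i) x; lra.
Qed.

Lemma Ssum_tail n i x :
  Ssum c s (n + i) x + 2 * c (n + i) ^+ 2 <= Ssum c s n x + 2 * c n ^+ 2.
Proof.
elim: i => [|i IH]; first by rewrite addn0.
rewrite addnS SsumS; have := gfun_le (n + i) x; have := hA (n + i); lra.
Qed.

Lemma Ssum_bnd n x : Ssum c s n x <= 2 * c 0 ^+ 2.
Proof.
have := Ssum_tail 0 n x; rewrite add0n Ssum0.
have : 0 <= c n ^+ 2 by rewrite sqr_ge0.
lra.
Qed.

Lemma Ffun_has_sup x : has_sup (range (fun n => Ssum c s n x)).
Proof.
split; first by exists (Ssum c s 0 x); exists 0%N.
by exists (2 * c 0 ^+ 2) => _ [n _ <-]; exact: Ssum_bnd.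
Qed.

Lemma Ffun_ge n x : Ssum c s n x <= Ffun c s x.
Proof. by apply: sup_upper_bound; [exact: Ffun_has_sup | exists n]. Qed.

Lemma Ffun_le n x : Ffun c s x <= Ssum c s n x + 2 * c n ^+ 2.
Proof.
apply: ge_sup; first by exists (Ssum c s 0 x); exists 0%N.
move=> _ [m _ <-].
have [nm|mn] := leqP n m.
  have := Ssum_tail n (m - n) x; rewrite subnKC //.
  have : 0 <= c m ^+ 2 by rewrite sqr_ge0.
  move: (Ssum c s m x) (Ssum c s n x) (c m ^+ 2) (c n ^+ 2) => a b u v.
  lra.
have := Ssum_mono m (n - m) x; rewrite subnKC; last exact: ltnW.
have : 0 <= c n ^+ 2 by rewrite sqr_ge0.
move: (Ssum c s m x) (Ssum c s n x) (c n ^+ 2) => a b v.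
lra.
Qed.

Lemma gfun_lip n x y :
  `|gfun c s n x - gfun c s n y| <= c n / s n * `|x - y|.
Proof.
rewrite /gfun -mulrBr normrM ger0_norm ?sqr_ge0 //.
have h := tent_lip (x / (c n * s n)) (y / (c n * s n)).
have cs : 0 < c n * s n by rewrite mulr_gt0.
rewrite -mulrBl normrM [`|(_)^-1|]gtr0_norm ?invr_gt0 // in h.
have -> : c n / s n = c n ^+ 2 * (c n * s n)^-1.
  by field; apply/andP; split; rewrite gt_eqF.
rewrite -mulrA ler_wpM2l ?sqr_ge0 //; apply: (le_trans h); by rewrite [leLHS]mulrC.
Qed.

Lemma gfun_piece n x y (j : int) :
  Num.floor (x / (c n * s n)) = j -> Num.floor (y / (c n * s n)) = j ->
  `|gfun c s n x - gfun c s n y| = c n / s n * `|x - y|.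
Proof.
move=> hx hy; rewrite /gfun -mulrBr normrM ger0_norm ?sqr_ge0 //.
have cs : 0 < c n * s n by rewrite mulr_gt0.
rewrite (@tent_piece _ j).
- rewrite -mulrBl normrM [`|(_)^-1|]gtr0_norm ?invr_gt0 //.
  field; apply/andP; split; rewrite gt_eqF //.
- by have := floorD1_gt (x / (c n * s n)); rewrite intrD -hx floor_le /= => /ltW.
- by have := floorD1_gt (y / (c n * s n)); rewrite intrD -hy floor_le /= => /ltW.
Qed.

Variable L : nat -> R.
Hypothesis hL0 : L 0 = 0.
Hypothesis hLS : forall n, L n.+1 = L n + c n / s n.

Lemma Ssum_lip n x y : `|Ssum c s n x - Ssum c s n y| <= L n * `|x - y|.
Proof.
elim: n => [|n IH]; first by rewrite !Ssum0 hL0 subrr normr0 mul0r.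
rewrite !SsumS hLS.
have -> : Ssum c s n x + gfun c s n x - (Ssum c s n y + gfun c s n y) =
  (Ssum c s n x - Ssum c s n y) + (gfun c s n x - gfun c s n y) by ring.
apply: (le_trans (ler_normD _ _)); rewrite mulrDl.
by apply: lerD => //; exact: gfun_lip.
Qed.

Hypothesis hL : forall n, 4 * L n * s n <= c n.
Hypothesis hA2 : forall n, 16 * c n.+1 ^+ 2 <= c n * s n.

Lemma core n x y :
  Num.floor (x / (c n * s n)) = Num.floor (y / (c n * s n)) ->
  2 * s n ^+ 2 <= `|x - y| -> c n * s n < `|Ffun c s x - Ffun c s y|.
Proof.
move=> hj hD.
have e1 := gfun_piece hj erefl.
have e2 := Ssum_lip n x y.
have t1 := Ffun_ge n.+1 x; have t2 := Ffun_le n.+1 x.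
have t3 := Ffun_ge n.+1 y; have t4 := Ffun_le n.+1 y.
rewrite !SsumS in t1 t2 t3 t4.
have hsn := hs n; have hcn := hc n.
have hLn := hL n.
have h16 := hA2 n.
have qs : c n / s n * s n = c n by rewrite divfK // gt_eqF.
have q0 : 0 <= c n / s n by rewrite divr_ge0 // ltW.
have D0 : 0 <= `|x - y| by [].
move: e1 e2 t1 t2 t3 t4 hD hLn h16 qs q0 D0.
move: (Ffun c s x) (Ffun c s y) (gfun c s n x) (gfun c s n y)
  (Ssum c s n x) (Ssum c s n y) (c n / s n) (L n) (`|x - y|) (c n.+1 ^+ 2) => a b gx gy Sx Sy q l D c1.
move: (c n) (s n) hsn hcn => cc ss hsn hcn.
move=> e1 e2 t1 t2 t3 t4 hD hLn h16 qs q0 D0.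
have hl : l <= q / 4.
  have : l * ss <= q / 4 * ss by rewrite mulrAC qs; lra.
  by rewrite ler_pM2r.
have k1 : (q - l) * D >= 3 / 4 * q * D.
  by rewrite ler_wpM2r //; lra.
have k2 : 3 / 4 * q * D >= 3 / 4 * q * (2 * ss ^+ 2).
  by rewrite ler_wpM2l // mulr_ge0.
have k3 : 3 / 4 * q * (2 * ss ^+ 2) = 3 / 2 * (cc * ss).
  by rewrite -qs; field.
have tri : `|gx - gy| <= `|a - b| + `|Sx - Sy| + `|(a - Sx - gx) - (b - Sy - gy)|.
  have -> : gx - gy = (a - b) - (Sx - Sy) - ((a - Sx - gx) - (b - Sy - gy)) by ring.
  by apply: (le_trans (ler_normB _ _)); rewrite lerD2r ler_normB.
have hT : `|(a - Sx - gx) - (b - Sy - gy)| <= 2 * c1.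
  rewrite ler_norml; apply/andP; split; lra.
have hm : (q - l) * D = q * D - l * D by ring.
have cs0 : 0 < cc * ss by rewrite mulr_gt0.
move: tri hT; rewrite e1.
move: (`|a - b|) (`|Sx - Sy|) (`|(a - Sx - gx) - (b - Sy - gy)|) e2 k1 k2 k3 hm.
move: (q * D) (l * D) ((q - l) * D) (3 / 4 * q * D) (3 / 4 * q * (2 * ss ^+ 2)) (cc * ss) h16 cs0.
move=> qD lD qlD z1 z2 cs h16 cs0 A B C e2 k1 k2 k3 hm tri hT.
lra.
Qed.

End F.


Lemma sum1_seq (R : realType) (T : Type) (L : seq T) :
  (\sum_(k <- L) (1 : \bar R) = (size L)%:R%:E)%E.
Proof.
elim: L => [|x L IH]; first by rewrite big_nil.
by rewrite big_cons IH /= -EFinD -natr1 addrC.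
Qed.

Lemma esum_seq_lb (R : realType) (T : choiceType) (S : set T) (L : seq T) :
  uniq L -> (forall k, k \in L -> S k) ->
  ((size L)%:R%:E <= esum S (fun _ => (1 : \bar R)))%E.
Proof.
move=> uL LS; apply: esum_ge; exists [set` L].
  by split; [exact: finite_seq | move=> k /= /LS].
by rewrite -fsbig_seq // sum1_seq.
Qed.

Lemma esum_gt_seq (R : realType) (T : choiceType) (S : set T) (B : R) :
  (B%:E < esum S (fun _ => (1 : \bar R)))%E ->
  exists L : seq T, [/\ uniq L, B < (size L)%:R & forall k, k \in L -> S k].
Proof.
move=> /ereal_sup_gt [_ [A [finA AS] <-]].
have [s eA] := (finite_seqP A).1 finA; rewrite eA in AS * => hB.
have e : [set` s] = [set` undup s].
  by apply/seteqP; split => k /=; rewrite mem_undup.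
rewrite e -fsbig_seq ?undup_uniq // sum1_seq lte_fin in hB.
exists (undup s); split => //; first exact: undup_uniq.
by move=> k hk; apply: AS; move: hk; rewrite mem_undup.
Qed.

Lemma pigeon3 (T : eqType) (L : seq T) (g : T -> int) :
  exists i : int, (size L <= 3 * count (fun k => (g k %% 3)%Z == i) L)%N.
Proof.
have H : (count (fun k => (g k %% 3)%Z == 0) L + count (fun k => (g k %% 3)%Z == 1) L
   + count (fun k => (g k %% 3)%Z == 2) L = size L)%N.
  elim: L => //= x L IH.
  have : (0 <= (g x %% 3)%Z < 3) by lia.
  move: IH; move: (g x %% 3)%Z => r IH hr.
  have : (r = 0 \/ r = 1 \/ r = 2) by lia.
  case=> [->|[->|->]] /=; lia.
have [h0|h0] := leqP (size L) (3 * count (fun k => (g k %% 3)%Z == 0) L).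
  by exists 0.
have [h1|h1] := leqP (size L) (3 * count (fun k => (g k %% 3)%Z == 1) L).
  by exists 1.
exists 2; move: H h0 h1.
move: (count (fun k => (g k %% 3)%Z == 0) L) (count (fun k => (g k %% 3)%Z == 1) L).
move: (count (fun k => (g k %% 3)%Z == 2) L) (size L) => a b c d; lia.
Qed.


Definition cube_of (R : realType) (eta x y : R) : 'rV[int]_2 :=
  \row_(i < 2) (if i == ord0 then Num.floor (x / eta) else Num.floor (y / eta)).

Lemma floor_close (R : realType) (a b : R) :
  Num.floor a = Num.floor b -> `|a - b| < 1.
Proof.
move=> e.
have h1 := floor_le a; have h2 := floorD1_gt a.
have h3 := floor_le b; have h4 := floorD1_gt b.
rewrite intrD e in h2; rewrite intrD in h4; rewrite e in h1.
move: h1 h2 h3 h4; move: (Num.floor b)%:~R => k *.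
rewrite ltr_norml; apply/andP; split; lra.
Qed.

Lemma floor_mul_bounds (R : realType) (eta x : R) : 0 < eta ->
  (Num.floor (x / eta))%:~R * eta <= x <= ((Num.floor (x / eta))%:~R + 1) * eta.
Proof.
move=> he.
have h1 := floor_le (x / eta); have h2 := floorD1_gt (x / eta).
rewrite intrD in h2.
apply/andP; split.
  by rewrite -ler_pdivlMr.
by rewrite -ler_pdivrMr // ltW.
Qed.

Lemma graph_in_cube (R : realType) (X : set R) (f : R -> R) (eta x : R) :
  0 < eta -> X x ->
  (grid_cube eta (cube_of eta x (f x)) `&` graph X f) !=set0.
Proof.
move=> he Xx.
exists (\row_(i < 2) (if i == ord0 then x else f x)); split; last by exists x.
move=> i; rewrite !mxE; case: (i == ord0); exact: floor_mul_bounds.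
Qed.

Lemma cube_of_eq (R : realType) (eta x y x' y' : R) : 0 < eta ->
  cube_of eta x y = cube_of eta x' y' ->
  Num.floor (x / eta) = Num.floor (x' / eta) /\ `|y - y'| < eta.
Proof.
move=> he e.
have e0 := congr1 (fun M : 'rV[int]_2 => M ord0 ord0) e.
have e1 := congr1 (fun M : 'rV[int]_2 => M ord0 (lift ord0 ord0)) e.
rewrite /= /cube_of !mxE /= in e0 e1.
split => //.
have := floor_close e1.
rewrite -mulrBl normrM (gtr0_norm (x := eta^-1)) ?invr_gt0 //.
by rewrite ltr_pdivrMr // mul1r.
Qed.

Lemma embed_cube_pt (R : realType) (X : set R) (delta : R) (k : 'rV[int]_1) :
  (grid_cube delta k `&` embed1 X) !=set0 ->
  exists x, X x /\ (k ord0 ord0)%:~R * delta <= x <= ((k ord0 ord0)%:~R + 1) * delta.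
Proof.
move=> [y [hy [x Xx ex]]]; exists x; split => //.
by have := hy ord0; rewrite -ex mxE.
Qed.

Lemma row1_inj (k k' : 'rV[int]_1) : k ord0 ord0 = k' ord0 ord0 -> k = k'.
Proof.
by move=> e; apply/matrixP => i j; rewrite !ord1.
Qed.

Lemma modsep (j j' : int) : (j %% 3)%Z = (j' %% 3)%Z -> j != j' ->
  (j + 3 <= j') || (j' + 3 <= j).
Proof. move=> h n. lia. Qed.

Lemma count_graph (R : realType) (X : set R) (F : R -> R) (eta delta : R)
  (L : seq 'rV[int]_1) :
  0 < eta -> 0 < delta -> uniq L ->
  (forall k, k \in L -> (grid_cube delta k `&` embed1 X) !=set0) ->
  (forall x y, X x -> X y -> Num.floor (x / eta) = Num.floor (y / eta) ->
     2 * delta <= `|x - y| -> eta < `|F x - F y|) ->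
  (((size L)%:R / 3)%:E <= Ndelta eta (graph X F))%E.
Proof.
move=> he hd uL hL hcore.
have : forall k, exists x, k \in L -> X x /\
   (k ord0 ord0)%:~R * delta <= x <= ((k ord0 ord0)%:~R + 1) * delta.
  move=> k; have [kL|kL] := boolP (k \in L).
    by have [x hx] := embed_cube_pt (hL k kL); exists x.
  by exists 0.
move=> /choice [px hpx].
have [i hi] := pigeon3 L (fun k => k ord0 ord0).
set L1 := seq.filter (fun k : 'rV[int]_1 => ((k ord0 ord0) %% 3)%Z == i) L.
have hL1 : size L1 = count (fun k : 'rV[int]_1 => ((k ord0 ord0) %% 3)%Z == i) L.
  by rewrite size_filter.
set h := fun k => cube_of eta (px k) (F (px k)).
have inj : {in L1 &, injective h}.
  move=> k k'; rewrite !mem_filter => /andP[ik kL] /andP[ik' kL'] ehk.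
  case: (eqVneq k k') => // nk; exfalso.
  have [pk /andP[b1 b2]] := hpx k kL.
  have [pk' /andP[b1' b2']] := hpx k' kL'.
  have [ef ey] := cube_of_eq he ehk.
  have nk0 : k ord0 ord0 != k' ord0 ord0.
    by apply: contra_neq nk => /row1_inj.
  have hsep : (k ord0 ord0 + 3 <= k' ord0 ord0) || (k' ord0 ord0 + 3 <= k ord0 ord0).
    move/eqP: ik => ik; move/eqP: ik' => ik'.
    by apply: modsep => //; rewrite ik ik'.
  have D : 2 * delta <= `|px k - px k'|.
    move: b1 b2 b1' b2'; move: hsep.
    move: (k ord0 ord0) (k' ord0 ord0) => a b hs b1 b2 b1' b2'.
    case/orP: hs => hab.
      have : (a + 3)%:~R * delta <= b%:~R * delta by apply: ler_wpM2r; [exact: ltW | rewrite ler_int].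
      rewrite intrD mulrDl mulrDl mul1r in b2 * => hh.
      rewrite distrC ger0_norm.
        move: hh b2 b1'; move: (a%:~R * delta) (b%:~R * delta) => u v; lra.
      move: hh b2 b1'; move: (a%:~R * delta) (b%:~R * delta) => u v; lra.
    have : (b + 3)%:~R * delta <= a%:~R * delta by apply: ler_wpM2r; [exact: ltW | rewrite ler_int].
    rewrite intrD mulrDl mulrDl mul1r in b2' * => hh.
    rewrite ger0_norm.
      move: hh b2' b1; move: (a%:~R * delta) (b%:~R * delta) => u v; lra.
    move: hh b2' b1; move: (a%:~R * delta) (b%:~R * delta) => u v; lra.
  have := hcore _ _ pk pk' ef D.
  by move: ey; move: (`|F (px k) - F (px k')|) => z; lra.
set G := map h L1.
have uG : uniq G by rewrite map_inj_in_uniq // filter_uniq.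
have GS : forall q, q \in G ->
    (grid_cube eta q `&` graph X F) !=set0.
  move=> q /mapP [k kL1 ->]; apply: graph_in_cube => //.
  by move: kL1; rewrite mem_filter => /andP[_ /hpx []].
have := @esum_seq_lb R _ _ _ uG GS; rewrite /Ndelta; apply: le_trans.
rewrite lee_fin size_map hL1 ler_pdivrMr // -natrM mulnC ler_nat.
exact: hi.
Qed.


Lemma ratio_X_gt (R : realType) (d : nat) (F : set 'rV[R]_d) (delta s : R) :
  0 < delta < 1 -> 0 < s -> (s%:E < box_ratio F delta)%E ->
  ((expR (s * - ln delta))%:E < Ndelta delta F)%E.
Proof.
move=> /andP[d0 d1] s0; rewrite /box_ratio.
have l0 : 0 < - ln delta by rewrite oppr_gt0 ln_lt0 // d0 d1.
case: (Ndelta delta F) => [m| |] //=; last by move=> _; rewrite ltry.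
rewrite !lte_fin ltr_pdivlMr // => hm.
have [m0|m0] := lerP m 0.
  rewrite (ln0 m0) in hm.
  have : 0 < s * - ln delta by rewrite mulr_gt0.
  move: hm; move: (s * - ln delta) => z h1 h2; lra.
by rewrite -[ltRHS](lnK (x := m)) ?posrE // ltr_expR.
Qed.

Lemma ratio_graph_ge (R : realType) (d : nat) (F : set 'rV[R]_d) (eta r B : R) :
  0 < eta < 1 -> 0 < B -> (B%:E <= Ndelta eta F)%E -> r * (- ln eta) <= ln B ->
  (r%:E <= box_ratio F eta)%E.
Proof.
move=> /andP[d0 d1] B0; rewrite /box_ratio.
have l0 : 0 < - ln eta by rewrite oppr_gt0 ln_lt0 // d0 d1.
case: (Ndelta eta F) => [m| |] //=; last by move=> *; rewrite leey.
rewrite !lee_fin => hm hr.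
rewrite ler_pdivlMr //; apply: (le_trans hr).
by rewrite ler_ln ?posrE // (lt_le_trans B0).
Qed.

Lemma ndelta_01 (R : realType) (d : nat) (F : set 'rV[R]_d) (delta : R) (m : R) :
  Ndelta delta F = m%:E -> m = 0 \/ 1 <= m.
Proof.
move=> hm.
have m0 : (0 <= m).
  have : (0 <= Ndelta delta F)%E by apply: esum_ge0.
  by rewrite hm lee_fin.
have [->|mp] := eqVneq m 0; [by left | right].
have : (0%:E < Ndelta delta F)%E by rewrite hm lte_fin lt_neqAle eq_sym mp.
move=> /esum_gt_seq [L [uL sL LS]].
have := @esum_seq_lb R _ _ _ uL LS; rewrite -/(Ndelta delta F) hm lee_fin.
apply: le_trans; rewrite ler1n; move: sL; rewrite ltr0n //.
Qed.

Lemma box_ratio_ge0 (R : realType) (d : nat) (F : set 'rV[R]_d) (delta : R) :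
  0 < delta < 1 -> (0 <= box_ratio F delta)%E.
Proof.
move=> /andP[d0 d1]; rewrite /box_ratio.
have l0 : 0 < - ln delta by rewrite oppr_gt0 ln_lt0 // d0 d1.
case hN : (Ndelta delta F) => [m| |] //=.
  rewrite lee_fin divr_ge0 //; last exact: ltW.
  by case: (ndelta_01 hN) => [->|h]; [rewrite ln0 | apply: ln_ge0].
have : (0 <= Ndelta delta F)%E by apply: esum_ge0.
by rewrite hN.
Qed.

Lemma ubd_ge (R : realType) (d : nat) (F : set 'rV[R]_d) (r : \bar R) :
  (forall e, 0 < e < 1 -> exists2 eta, 0 < eta < e & (r <= box_ratio F eta)%E) ->
  (r <= upper_box_dim F)%E.
Proof.
move=> H; apply/ereal_infP => _ [e he <-].
have he' : 0 < e < 1 by move: he; rewrite /= in_itv.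
have [eta heta hr] := H e he'.
apply: (le_trans hr); apply: ereal_sup_ubound; exists eta => //.
Qed.

Lemma ubd_ge0 (R : realType) (d : nat) (F : set 'rV[R]_d) :
  (0 <= upper_box_dim F)%E.
Proof.
apply: ubd_ge => e /andP[e0 e1]; exists (e / 2).
  apply/andP; split; lra.
apply: box_ratio_ge0; apply/andP; split; lra.
Qed.

Lemma ubd_gt (R : realType) (d : nat) (F : set 'rV[R]_d) (s : \bar R) :
  (s < upper_box_dim F)%E ->
  forall e, 0 < e < 1 -> exists2 delta, 0 < delta < e & (s < box_ratio F delta)%E.
Proof.
move=> H e he.
have : (s < ereal_sup [set box_ratio F delta | delta in `]0%R, e[ ])%E.
  apply: (lt_le_trans H); apply: ereal_inf_lbound; exists e => //.
move=> /ereal_sup_gt [_ [delta hd <-] hs]; exists delta => //.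
Qed.


Lemma archi_inv (R : realType) (e : R) : 0 < e -> exists n : nat, (n.+1%:R)^-1 < e.
Proof.
move=> e0; exists (Num.truncn (e^-1)).
have h := truncnS_gt (e^-1).
by rewrite invf_plt ?posrE ?ltr0n.
Qed.

Definition bnd (R : realType) (s r c L : R) (n : nat) : R :=
  Num.min (Num.min (1/2) (expR (- ((ln 3 + r * - ln c) / (2 * s - r)))))
          (Num.min (c / (4 * L + 1)) (n.+1%:R)^-1).

Definition sigf (R : realType) (pk : R -> R) (s r c L : R) (n : nat) : R :=
  Num.sqrt (pk (bnd s r c L n ^+ 2)).

Fixpoint st (R : realType) (pk : R -> R) (s r : R) (n : nat) : R * R * R :=
  match n with
  | 0 => (1/2, sigf pk s r (1/2) 0 0, 0)
  | m.+1 => let: (c, sg, L) := st pk s r m in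
            (c * sg / 16, sigf pk s r (c * sg / 16) (L + c / sg) n, L + c / sg)
  end.

Lemma bnd_gt0 (R : realType) (s r c L : R) n : 0 < c -> 0 <= L -> 0 < bnd s r c L n.
Proof.
move=> c0 L0; rewrite /bnd !lt_min expR_gt0 andbT; apply/andP; split => //.
apply/andP; split; first by rewrite divr_gt0 //; lra.
by rewrite invr_gt0 ltr0n.
Qed.

Lemma bnd_lt1 (R : realType) (s r c L : R) n : bnd s r c L n < 1.
Proof.
rewrite /bnd gt_min; apply/orP; left; rewrite gt_min; apply/orP; left; lra.
Qed.

Section Seq.
Variables (R : realType) (pk : R -> R) (s r : R) (Good : R -> Prop).
Hypothesis hpk : forall e, 0 < e < 1 -> 0 < pk e < e /\ Good (pk e).

Lemma sig_props c L n : 0 < c -> 0 <= L ->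
  0 < sigf pk s r c L n < bnd s r c L n /\ Good (sigf pk s r c L n ^+ 2).
Proof.
move=> c0 L0; have b0 := bnd_gt0 s r n c0 L0; have b1 := @bnd_lt1 R s r c L n.
have hb : 0 < bnd s r c L n ^+ 2 < 1.
  rewrite exprn_gt0 //= expr_lt1 //; exact: ltW.
have [/andP[p0 p1] G] := hpk hb.
rewrite /sigf sqr_sqrtr ?ltW //; split => //.
rewrite sqrtr_gt0 p0 /=.
rewrite -(@ltr_pXn2r _ 2) ?nnegrE ?sqrtr_ge0 ?ltW // sqr_sqrtr ?ltW //.
Qed.

Definition cc n := (st pk s r n).1.1.
Definition ss n := (st pk s r n).1.2.
Definition LL n := (st pk s r n).2.

Lemma st_S n : st pk s r n.+1 =
  (cc n * ss n / 16, sigf pk s r (cc n * ss n / 16) (LL n + cc n / ss n) n.+1, LL n + cc n / ss n).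
Proof. by rewrite /= /cc /ss /LL; case: (st pk s r n) => [[a b] d]. Qed.

Lemma st_props n : [/\ 0 < cc n <= 1/2, 0 <= LL n,
  0 < ss n < bnd s r (cc n) (LL n) n & Good (ss n ^+ 2)].
Proof.
elim: n => [|n [/andP[c0 c1] L0 /andP[s0 s1] G]].
  have [h1 h2] := @sig_props (1/2) 0 0 ltac:(lra) (lexx _).
  rewrite /cc /ss /LL /=; split => //; apply/andP; split; lra.
have s1' : ss n < 1 := lt_trans s1 (bnd_lt1 _ _ _ _ _).
have L1 : 0 <= LL n + cc n / ss n by rewrite addr_ge0 // divr_ge0 // ltW.
have c0' : 0 < cc n * ss n / 16 by rewrite divr_gt0 // mulr_gt0.
have [h1 h2] := sig_props n.+1 c0' L1.
rewrite /cc /ss /LL st_S /=; split => //.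
apply/andP; split => //.
have : cc n * ss n <= cc n by rewrite ger_pMr // ltW.
lra.
Qed.

End Seq.


Lemma main_construct (R : realType) (X : set R) (s r : R) :
  0 < r -> r < 2 * s -> (s%:E < dimB X)%E ->
  exists f, unif_cont_on X f /\ (r%:E <= upper_box_dim (graph X f))%E.
Proof.
move=> r0 rs hX.
have s0 : 0 < s by lra.
pose Good (d : R) := exists L : seq 'rV[int]_1, [/\ uniq L,
   expR (s * - ln d) < (size L)%:R &
   forall k, k \in L -> (grid_cube d k `&` embed1 X) !=set0].
have hex : forall e, exists d, 0 < e < 1 -> 0 < d < e /\ Good d.
  move=> e; have [he|he] := boolP (0 < e < 1); last by exists 0.
  rewrite /dimB in hX.
  have [d /andP[d0 de] hd] := ubd_gt hX he.
  exists d => _; split; first by rewrite d0.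
  have d1 : 0 < d < 1 by rewrite d0 (lt_trans de) //; case/andP: he.
  have := ratio_X_gt d1 s0 hd => /esum_gt_seq [L [uL sL LS]].
  by exists L; split.
have [pk hpk] := choice hex.
have hpk' : forall e, 0 < e < 1 -> 0 < pk e < e /\ Good (pk e).
  by move=> e he; exact: hpk e he.
have P := st_props s r hpk'.
set c := cc pk s r; set sg := ss pk s r; set L := LL pk s r.
have hc : forall n, 0 < c n by move=> n; have [/andP[]] := P n.
have hc1 : forall n, c n <= 1/2 by move=> n; have [/andP[]] := P n.
have hs : forall n, 0 < sg n by move=> n; have [_ _ /andP[]] := P n.
have hsb : forall n, sg n < bnd s r (c n) (L n) n by move=> n; have [_ _ /andP[]] := P n.
have hL0' : forall n, 0 <= L n by move=> n; have [] := P n.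
have hG : forall n, Good (sg n ^+ 2) by move=> n; have [] := P n.
have hL0 : L 0 = 0 by [].
have hLS : forall n, L n.+1 = L n + c n / sg n.
  by move=> n; rewrite /L /LL st_S.
have hcS : forall n, c n.+1 = c n * sg n / 16.
  by move=> n; rewrite /c /cc st_S.
have hs1 : forall n, sg n < (n.+1%:R)^-1.
  move=> n; apply: (lt_le_trans (hsb n)).
  by rewrite /bnd ge_min; apply/orP; right; rewrite ge_min lexx orbT.
have hs1' : forall n, sg n < 1.
  move=> n; apply: (lt_le_trans (hs1 n)); rewrite invf_le1 ?ltr0n // ler1n //.
have hL : forall n, 4 * L n * sg n <= c n.
  move=> n; have h := hsb n.
  have : sg n <= c n / (4 * L n + 1).
    apply: ltW; apply: (lt_le_trans h).
    by rewrite /bnd ge_min; apply/orP; right; rewrite ge_min lexx.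
  have := hL0' n; have := hs n; have := hc n.
  rewrite ler_pdivlMr; last by have := hL0' n; lra.
  move: (L n) (sg n) (c n) => a b d h1 h2 h3 h4.
  have : 0 <= a * b by rewrite mulr_ge0 // ltW.
  move: h4; rewrite mulrDr mulr1 => h4; nra.
have hA2 : forall n, 16 * c n.+1 ^+ 2 <= c n * sg n.
  move=> n; rewrite hcS.
  have h0 : 0 < c n * sg n by rewrite mulr_gt0.
  have h1 : c n * sg n <= 1.
    have := hc1 n; have := hs1' n; have := hc n; have := hs n.
    move: (c n) (sg n) => a b *; nra.
  move: h0 h1; move: (c n * sg n) => z h0 h1.
  rewrite (_ : 16 * (z / 16) ^+ 2 = z * (z / 16)); last by field.
  rewrite -[leRHS]mulr1 ler_wpM2l ?ltW //; lra.
have hA : forall n, 2 * c n.+1 ^+ 2 <= c n ^+ 2.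
  move=> n; rewrite hcS.
  have := hc n; have := hs n; have := hs1' n.
  move: (c n) (sg n) => a b *.
  rewrite (_ : 2 * (a * b / 16) ^+ 2 = a ^+ 2 * (b ^+ 2 / 128)); last by field.
  rewrite -[leRHS]mulr1 ler_wpM2l ?sqr_ge0 //.
  have : b ^+ 2 <= 1 by rewrite expr_le1 // ltW.
  lra.
have cor := core hc hs hA hL0 hLS hL hA2.
exists (Ffun c sg); split.
  move=> eps e0.
  have e4 : 0 < eps / 4 by rewrite divr_gt0.
  have [n hn] := archi_inv e4.
  have hcm : c n.+1 ^+ 2 < eps / 4.
    rewrite hcS.
    have := hs1' n; have := hs1 n; have := hc1 n; have := hc n; have := hs n.
    move: hn; move: (c n) (sg n) ((n.+1)%:R^-1) (eps / 4) => a b q z hn h1 h2 h3 h4 h5.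
    have : a * b <= 1 / 2 * b by rewrite ler_wpM2r // ltW.
    move=> hab; have : a * b / 16 <= b / 32.
    by rewrite ler_pdivrMr //; apply: (le_trans hab); lra.
    have : 0 < a * b / 16 by rewrite divr_gt0 // mulr_gt0.
    move: (a * b / 16) => u hu1 hu2.
    have : u ^+ 2 <= u by rewrite expr2 ger_pMr //; lra.
    lra.
  set m := n.+1.
  have Lm := hL0' m.
  exists ((eps / 2) / (L m + 1)).
    by rewrite divr_gt0 //; lra.
  move=> x y _ _ hxy.
  have a1 := Ffun_ge sg hA m x; have a2 := Ffun_le sg hA m x.
  have a3 := Ffun_ge sg hA m y; have a4 := Ffun_le sg hA m y.
  have a5 := Ssum_lip hc hs hL0 hLS m x y.
  have a6 : L m * `|x - y| <= eps / 2.
    have h1 : L m * `|x - y| <= L m * ((eps / 2) / (L m + 1)) by rewrite ler_wpM2l // ltW.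
    apply: (le_trans h1).
    rewrite mulrA ler_pdivrMr; last by lra.
    move: Lm; move: (L m) => l hl; nra.
  move: a5; rewrite ler_norml => /andP[b1 b2].
  rewrite ltr_norml; move: a1 a2 a3 a4 b1 b2 a6 hcm.
  move: (Ffun c sg x) (Ffun c sg y) (Ssum c sg m x) (Ssum c sg m y) (L m * `|x - y|) (c m ^+ 2) => u v p q z w.
  move=> *; apply/andP; split; lra.
apply: ubd_ge => e /andP[e0 e1].
have [n hn] := archi_inv e0.
have cs0 : 0 < c n * sg n by rewrite mulr_gt0.
have cs1 : c n * sg n < sg n.
  by rewrite gtr_pMl //; have := hc1 n; lra.
exists (c n * sg n).
  rewrite cs0 /=; apply: (lt_trans cs1); exact: (lt_trans (hs1 n)).
have [L0 [uL sL LS]] := hG n.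
have eta01 : 0 < c n * sg n < 1.
  by rewrite cs0 /=; apply: (lt_trans cs1).
have d0 : 0 < sg n ^+ 2 by rewrite exprn_gt0.
have hcount := count_graph (F := Ffun c sg) cs0 d0 uL LS
   (fun x y _ _ hf hd => cor n x y hf hd).
have sz0 : 0 < (size L0)%:R :> R by apply: lt_trans sL; exact: expR_gt0.
apply: (ratio_graph_ge eta01 _ hcount); first by rewrite divr_gt0.
have hsn := hs n; have hcn := hc n.
have E1 : ln (c n * sg n) = ln (c n) + ln (sg n) by rewrite lnM ?posrE.
have E2 : ln ((size L0)%:R / 3) = ln (size L0)%:R - ln 3 :> R.
  by rewrite lnM ?posrE ?invr_gt0 // lnV ?posrE.
have E3 : ln (sg n ^+ 2) = 2 * ln (sg n) by rewrite lnXn // mulr_natl.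
have E4 : s * - ln (sg n ^+ 2) < ln (size L0)%:R.
  by rewrite -ltr_expR lnK ?posrE.
set K := (ln 3 + r * - ln (c n)) / (2 * s - r).
have E5 : sg n <= expR (- K).
  apply: ltW; apply: (lt_le_trans (hsb n)).
  by rewrite /bnd ge_min; apply/orP; left; rewrite ge_min lexx orbT.
have E6 : K <= - ln (sg n).
  by rewrite lerNr -[leRHS]expRK ler_ln ?posrE ?expR_gt0.
have E7 : ln 3 + r * - ln (c n) <= (2 * s - r) * - ln (sg n).
  have -> : ln 3 + r * - ln (c n) = (2 * s - r) * K.
    by rewrite /K; field; apply/negP => /eqP; lra.
  by rewrite ler_wpM2l //; lra.
rewrite E1 E2; rewrite E3 in E4.
move: E4 E7.
have -> : r * - (ln (c n) + ln (sg n)) = r * - ln (c n) + r * - ln (sg n) by ring.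
have -> : (2 * s - r) * - ln (sg n) = 2 * (s * - ln (sg n)) - r * - ln (sg n) by ring.
have -> : s * - (2 * ln (sg n)) = 2 * (s * - ln (sg n)) by ring.
move: (r * - ln (c n)) (r * - ln (sg n)) (s * - ln (sg n)) (ln (size L0)%:R) (ln (3 : R)).
move=> *; lra.
Qed.


Lemma ereal_le_approx (R : realType) (x y : \bar R) :
  (forall r : R, (r%:E < x)%E -> (r%:E <= y)%E) -> (x <= y)%E.
Proof.
case: x => [x0| |] H; last by rewrite leNye.
- case: y H => [y0| |] H; last first.
  + by have := H (x0 - 1) ltac:(rewrite lte_fin; lra).
  + by rewrite leey.
  rewrite lee_fin; rewrite leNgt; apply/negP => hyx.
  have := H ((x0 + y0) / 2) ltac:(rewrite lte_fin; lra).
  rewrite lee_fin; lra.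
- case: y H => [y0| |] H //.
  + by have := H (y0 + 1)%R ltac:(exact: ltry); rewrite lee_fin gerDl ler10.
  + by have := H 0 ltac:(exact: ltry).
Qed.

Lemma dimGB_ge (R : realType) (X : set R) (f : R -> R) :
  unif_cont_on X f -> (upper_box_dim (graph X f) <= dimGB X)%E.
Proof. by move=> hf; apply: ereal_sup_ubound; exists f. Qed.

Lemma dimGB_ge0 (R : realType) (X : set R) : (0 <= dimGB X)%E.
Proof.
apply: le_trans (dimGB_ge (f := fun _ => 0) _); first exact: ubd_ge0.
by move=> eps e0; exists 1 => // x y _ _ _; rewrite subrr normr0.
Qed.

Theorem theorem2 (R : realType) (X : set R) (a : \bar R) :
  X `<=` `[0, 1] -> dimB X = a -> (2%:E * a <= dimGB X)%E.
Proof.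
move=> _ <-; apply: ereal_le_approx => r hr.
have [r0|r0] := lerP r 0.
  by apply: le_trans (dimGB_ge0 X); rewrite lee_fin.
have [s [rs hs]] : exists s : R, r < 2 * s /\ (s%:E < dimB X)%E.
  move: hr; case: (dimB X) => [a0| |] //=.
  - rewrite -EFinM lte_fin => h; exists ((r / 2 + a0) / 2); split; first lra.
    by rewrite lte_fin; lra.
  - by move=> _; exists r; split; [lra | exact: ltry].
  - by rewrite mulrNy gtr0_sg // mul1e ltNge leNye.
have [f [hf hub]] := main_construct r0 rs hs.
exact: le_trans hub (dimGB_ge hf).
Qed.
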